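(* Let $\varphi\in\mathcal{M}$ be a matching. Then there exists a matching mechanism that is resolute, $\langle\varphi\rangle$-symmetric and weakly Pareto optimal.
   Context: Fix $n\ge 2$, $W=\{1,\dots,n\}$ (women), $M=\{n+1,\dots,2n\}$ (men), $I=W\cup M$. Permutations compose right-to-left. A preference profile is a function $p$ on $I$ assigning to each $x\in W$ a linear order $p(x)$ on $M$ and to each $y\in M$ a linear order $p(y)$ on $W$; $\mathcal{P}$ is the set of preference profiles. A matching is a permutation $\mu$ of $I$ with $\mu(W)=M$, $\mu(M)=W$ and $\mu(\mu(z))=z$ for all $z\in I$; $\mathcal{M}$ is the set of matchings. $\mu$ is weakly Pareto optimal for $p$ if there is no $\mu'\in\mathcal{M}$ with $\mu'(z)\succ_{p(z)}\mu(z)$ for every $z\in I$. Let $G^*=\{\psi\in\mathrm{Sym}(I):\{\psi(W),\psi(M)\}=\{W,M\}\}$. For a linear order $R$ on $X\subseteq I$ and $\psi\in\mathrm{Sym}(I)$, $\psi R$ is the relation on $\psi(X)$ with $(a,b)\in\psi R$ iff $(\psi^{-1}(a),\psi^{-1}(b))\in R$. For $p\in\mathcal{P}$, $\psi\in G^*$, $p^\psi(z)=\psi\,p(\psi^{-1}(z))$. For a permutation $\mu$, $\mu^\psi=\psi\mu\psi^{-1}$; $S^\psi=\{\mu^\psi:\mu\in S\}$. A matching mechanism is a correspondence $F$ from $\mathcal{P}$ to $\mathcal{M}$; it is resolute if $|F(p)|=1$ for all $p$; weakly Pareto optimal if every element of $F(p)$ is weakly Pareto optimal for $p$, for all $p$;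 for $U\subseteq G^*$ it is $U$-symmetric if $F(p^\psi)=F(p)^\psi$ for all $p\in\mathcal{P}$, $\psi\in U$. $\langle\varphi\rangle=\{id_I,\varphi\}$ is the group generated by $\varphi$. *)

(* Defs.v *)
From mathcomp Require Import all_boot fingroup perm.
Set Implicit Arguments. Unset Strict Implicit. Unset Printing Implicit Defensive.
Local Open Scope group_scope.

(* Agents: I = 'I_(n+n); women W = {0,...,n-1}, men M = {n,...,2n-1}
   (0-based shift of the paper's {1..n} and {n+1..2n}). *)
Notation agent n := (ordinal (n + n)).
Definition women (n : nat) : {set agent n} := [set i : agent n | i < n].
Definition men (n : nat) : {set agent n} := [set i : agent n | n <= i].

Definition other_side n (z : agent n) : {set agent n} :=
  if z \in women n then men n else women n.

(* R is a (strict) linear order on X : a relation supported on X x X that is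
   irreflexive, transitive and total on X.  "a R b" reads "a is preferred to b". *)
Definition linear_order_on (T : finType) (X : {set T}) (R : rel T) : Prop :=
  [/\ forall a b, R a b -> (a \in X) && (b \in X),
      forall a, ~~ R a a,
      forall a b c, R a b -> R b c -> R a c &
      forall a b, a \in X -> b \in X -> a != b -> R a b || R b a].

Definition profile n (p : agent n -> rel (agent n)) : Prop :=
  forall z, linear_order_on (other_side z) (p z).

Definition matching n (mu : {perm agent n}) : Prop :=
  [/\ mu @: women n = men n, mu @: men n = women n &
      forall z, mu (mu z) = z].

Definition matchings n : {set {perm agent n}} :=
  [set mu : {perm agent n} | [&& mu @: women n == men n, mu @: men n == women n &
               [forall z, mu (mu z) == z]]].

Definition weakly_pareto_optimal n (p : agent n -> rel (agent n))
  (mu : {perm agent n}) : Prop :=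
  ~ exists mu' : {perm agent n}, matching mu' /\ forall z, p z (mu' z) (mu z).

Definition Gstar n : {set {perm agent n}} :=
  [set psi : {perm agent n} | [set psi @: women n; psi @: men n] == [set women n; men n]].

Definition profile_act n (p : agent n -> rel (agent n)) (psi : {perm agent n})
  : agent n -> rel (agent n) :=
  fun z a b => p ((psi^-1)%g z) ((psi^-1)%g a) ((psi^-1)%g b).

(* Matching mechanisms: F p is the set of matchings selected at p
   (only its values on genuine profiles matter). *)
Definition mechanism n (F : (agent n -> rel (agent n)) -> {set {perm agent n}})
  : Prop := forall p, profile p -> F p \subset matchings n.

Definition resolute n (F : (agent n -> rel (agent n)) -> {set {perm agent n}})
  : Prop := forall p, profile p -> #|F p| = 1%N.

Definition mech_weakly_pareto_optimal n
  (F : (agent n -> rel (agent n)) -> {set {perm agent n}}) : Prop :=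
  forall p, profile p -> forall mu, mu \in F p -> weakly_pareto_optimal p mu.

(* mu^psi = psi mu psi^-1 is mathcomp conjugation  mu ^ psi  (= psi^-1 * mu * psi
   with mathcomp's left-to-right composition), and S^psi = S :^ psi. *)
Definition mech_symmetric n (U : {set {perm agent n}})
  (F : (agent n -> rel (agent n)) -> {set {perm agent n}}) : Prop :=
  forall p, profile p -> forall psi, psi \in U ->
    F (profile_act p psi) = (F p) :^ psi.

(* Main.v *)
Require Import Defs.
From mathcomp Require Import all_boot fingroup perm.
From Stdlib Require Import FunctionalExtensionality.
Local Open Scope group_scope.
Set Implicit Arguments. Unset Strict Implicit.

Definition mymatch {n} (mu : {perm agent n}) : bool :=
  [forall z, ((mu z < n) == ~~ (z < n)) && (mu (mu z) == z)].

Lemma mymatchP n (mu : {perm agent n}) :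
  reflect ((forall z, (mu z < n) = ~~ (z < n)) /\ (forall z, mu (mu z) = z)) (mymatch mu).
Proof.
apply: (iffP forallP) => [H|[H1 H2] z].
  by split=> z; case/andP: (H z) => /eqP ? /eqP ?.
by rewrite H1 H2 !eqxx.
Qed.

Lemma matchingsE n (mu : {perm agent n}) : (mu \in matchings n) = mymatch mu.
Proof.
rewrite inE; apply/idP/mymatchP.
  case/and3P => /eqP EW /eqP EM /forallP Hi; split; last by move=> z; apply/eqP.
  move=> z; case: (ltnP z n) => hz /=.
    have : mu z \in mu @: women n by apply: imset_f; rewrite inE.
    by rewrite EW inE leqNgt => /negbTE.
  have : mu z \in mu @: men n by apply: imset_f; rewrite inE.
  by rewrite EM inE.
move=> [H1 H2]; apply/and3P; split; last by apply/forallP => z; rewrite H2.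
- apply/eqP/setP => x; rewrite inE; apply/imsetP/idP.
    by case=> y; rewrite inE => hy ->; rewrite leqNgt H1 hy.
  move=> hx; exists (mu x); last by rewrite H2.
  by rewrite inE H1 -leqNgt.
- apply/eqP/setP => x; rewrite inE; apply/imsetP/idP.
    by case=> y; rewrite inE => hy ->; rewrite H1 -leqNgt.
  move=> hx; exists (mu x); last by rewrite H2.
  by rewrite inE leqNgt H1 hx.
Qed.

Lemma matchingE n (mu : {perm agent n}) : matching mu <-> mymatch mu.
Proof.
rewrite -matchingsE inE; split.
  by move=> [E1 E2 H]; rewrite E1 E2 !eqxx; apply/forallP => z; rewrite H.
by case/and3P => /eqP E1 /eqP E2 /forallP H; split => // z; apply/eqP.
Qed.

Lemma conjE (T : finType) (s t : {perm T}) x : (s ^ t) x = t (s (t^-1 x)).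
Proof. by rewrite -{1}(permKV t x) permJ. Qed.

Lemma mymatch_conj n (mu psi : {perm agent n}) (b : bool) :
  (forall z, (psi z < n) = b (+) (z < n)) -> mymatch mu -> mymatch (mu ^ psi).
Proof.
move=> Hp /mymatchP [H1 H2]; apply/mymatchP.
have Hi z : (psi^-1 z < n) = b (+) (z < n).
  by rewrite -{2}(permKV psi z) Hp addbA addbb.
split=> z; rewrite !conjE.
  by rewrite Hp H1 Hi addbN addbA addbb.
by rewrite permK H2 permKV.
Qed.

Definition wpob {n} (p : agent n -> rel (agent n)) (mu : {perm agent n}) : bool :=
  ~~ [exists mu' : {perm agent n}, mymatch mu' && [forall z, p z (mu' z) (mu z)]].

Definition Sset {n} (phi : {perm agent n}) p : {set {perm agent n}} :=
  [set mu | [&& mymatch mu, mu ^ phi == mu & wpob p mu]].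

Definition Fm {n} (phi : {perm agent n}) p : {set {perm agent n}} :=
  if [pick mu in Sset phi p] is Some mu then [set mu] else set0.

Lemma phiV n (phi : {perm agent n}) : mymatch phi -> phi^-1 = phi.
Proof.
move/mymatchP=> [_ H]; apply/permP => x.
by rewrite -{1}(H (phi^-1 x)) permKV.
Qed.

Lemma phi_side n (phi : {perm agent n}) : mymatch phi ->
  forall z, (phi z < n) = true (+) (z < n).
Proof. by move/mymatchP=> [H _] z; rewrite H. Qed.

Lemma Sset_act n (phi : {perm agent n}) p : mymatch phi ->
  Sset phi (profile_act p phi) = Sset phi p.
Proof.
move=> Hphi; have V := phiV Hphi; have Hs := phi_side Hphi.
have Hi : forall z, phi (phi z) = z by case/mymatchP: Hphi.
apply/setP=> mu; rewrite !inE.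
have [Hc|] := eqVneq (mu ^ phi) mu; last by rewrite !andbF.
have Hmu z : phi (mu (phi z)) = mu z by rewrite -{2}Hc conjE V.
rewrite /=; congr (_ && ~~ _).
apply/existsP/existsP => -[mu' /andP[Hm /forallP Hz]]; exists (mu' ^ phi);
  rewrite (mymatch_conj Hs Hm) /=; apply/forallP => z.
  have := Hz (phi z); rewrite /profile_act V Hi Hmu.
  by rewrite conjE V.
rewrite /profile_act V conjE V Hi -Hmu Hi.
exact: Hz.
Qed.

Lemma tperm_fix n (x y z : agent n) :
  (z < n) != (x < n) -> (z < n) != (y < n) -> tperm x y z = z.
Proof.
move=> hx hy; apply: tpermD.
  by apply: contraNneq hx => ->.
by apply: contraNneq hy => ->.
Qed.

Lemma tperm_side n (x y z : agent n) :
  (x < n) = (y < n) -> (tperm x y z < n) = (z < n).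
Proof. by move=> hxy; case: tpermP => [->|->|]. Qed.

Lemma tperm_comm n (x1 y1 x2 y2 z : agent n) :
  x1 < n -> y1 < n -> ~~ (x2 < n) -> ~~ (y2 < n) ->
  tperm x1 y1 (tperm x2 y2 z) = tperm x2 y2 (tperm x1 y1 z).
Proof.
move=> h1 h2 h3 h4.
case: (ltnP z n) => hz.
  rewrite (@tperm_fix _ x2 y2 z); last 2 first.
  - by rewrite hz (negbTE h3).
  - by rewrite hz (negbTE h4).
  by rewrite (@tperm_fix _ x2 y2 (tperm x1 y1 z)) // tperm_side ?h1 ?h2 // hz
    ?(negbTE h3) ?(negbTE h4).
rewrite (@tperm_fix _ x1 y1 z); last 2 first.
- by rewrite ltnNge hz h1.
- by rewrite ltnNge hz h2.
by rewrite (@tperm_fix _ x1 y1 (tperm x2 y2 z)) // tperm_side ?(negbTE h3)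
  ?(negbTE h4) // ltnNge hz ?h1 ?h2.
Qed.

Lemma exists_S n (phi : {perm agent n}) p : 0 < n -> mymatch phi -> profile p ->
  exists mu, mu \in Sset phi p.
Proof.
move=> n0 Hphi Hp.
have V := phiV Hphi; have Hs := phi_side Hphi.
have Hi : forall z, phi (phi z) = z by case/mymatchP: Hphi.
have hn0 : 0 < n + n by rewrite addn_gt0 n0.
pose w0 : agent n := Ordinal hn0.
have hw0 : w0 < n by [].
pose a := phi w0.
have ha : ~~ (a < n) by rewrite /a Hs hw0.
pose cnt x := #|[set y | p w0 x y]|.
have [m hm Hmax] := @arg_maxnP _ a (fun x => ~~ (x < n)) cnt ha.
have Htop : forall y, ~~ p w0 y m.
  move=> y; apply/negP => Hy.
  have [Hsup Hirr Htr Htot] := Hp w0.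
  have /andP[hy _] := Hsup _ _ Hy.
  move: hy; rewrite /other_side inE hw0 inE => hy.
  have {}hy : ~~ (y < n) by rewrite -leqNgt.
  have := Hmax y hy; apply/negP; rewrite -ltnNge.
  apply: proper_card; apply/properP; split.
    by apply/subsetP => z; rewrite !inE => /(Htr _ _ _ Hy).
  by exists m; rewrite !inE ?Hy // Hirr.
pose tau := tperm a m.
have Htau z : (tau z < n) = false (+) (z < n).
  by rewrite tperm_side // (negbTE ha) (negbTE hm).
exists (phi ^ tau); rewrite inE; apply/and3P; split.
- exact: mymatch_conj Htau Hphi.
- apply/eqP/permP => x.
  have Hsig y : phi (tau (phi y)) = tperm w0 (phi m) y.
    by rewrite -{2}V -conjE tpermJ /a Hi.
  rewrite !conjE V tpermV Hsig.
  rewrite tperm_comm ?Hs ?hw0 ?(negbN) // -?ltnNge ?(negbTE hm) //.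
  by rewrite -Hsig Hi.
- apply/existsP => -[mu' /andP[_ /forallP Hz]].
  have := Hz w0; rewrite conjE tpermV.
  rewrite (@tperm_fix _ a m w0); last 2 first.
  + by rewrite hw0 (negbTE ha).
  + by rewrite hw0 (negbTE hm).
  by rewrite tpermL (negbTE (Htop _)).
Qed.

Theorem theorem6 (n : nat) (hn : 2 <= n) (phi : {perm agent n})
  (hphi : matching phi) :
  exists F : (agent n -> rel (agent n)) -> {set {perm agent n}},
    [/\ mechanism F, resolute F,
        mech_symmetric [set 1%g; phi] F & mech_weakly_pareto_optimal F].
Proof.
have Hphi : mymatch phi by apply/matchingE.
have n0 : 0 < n by apply: leq_trans hn.
exists (Fm phi); split.
- move=> p _; rewrite /Fm; case: pickP => [mu Hmu|_]; last exact: sub0set.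
  rewrite sub1set matchingsE; move: Hmu; rewrite inE.
  by case/and3P.
- move=> p Hp; rewrite /Fm; case: pickP => [mu _|H]; first exact: cards1.
  have [mu Hmu] := exists_S n0 Hphi Hp.
  by move: (H mu); rewrite Hmu.
- move=> p _ psi; rewrite !inE => /orP[/eqP ->|/eqP ->].
    have -> : profile_act p 1 = p.
      by apply: functional_extensionality => z; apply: functional_extensionality => x;
        apply: functional_extensionality => y; rewrite /profile_act invg1 !perm1.
    by rewrite conjsg1.
  rewrite /Fm Sset_act //; case: pickP => [mu Hmu|_]; last by rewrite conj0g.
  move: Hmu; rewrite inE => /and3P[_ /eqP Hc _].
  by rewrite conjg_set1 Hc.
- move=> p _ mu; rewrite /Fm; case: pickP => [mu0 Hmu0|_]; last by rewrite inE.
  rewrite inE => /eqP ->; move: Hmu0; rewrite inE => /and3P[_ _ /existsP H].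
  move=> [mu' [Hm Hz]]; apply: H; exists mu'.
  by rewrite (proj1 (matchingE mu') Hm); apply/forallP.
Qed.
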